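(* Let $G$ be a connected simple graph without bridges whose edge set is identified with $[d+1]$, let $B_1,\dots,B_n$ be the bases (spanning trees) of its graphic matroid, all of cardinality $k$, and let $P=\operatorname{tconv}(V)$ with $V=(-e_{B_1},\dots,-e_{B_n})$. Then the origin $\mathbf{0}\in\mathbb{T}^d$ lies in $P$, and $\operatorname{type}_V(\mathbf{0})=(T^{(0)}_1,\dots,T^{(0)}_{d+1})$ with $T^{(0)}_i=\{j\in[n]: i\in B_j\}$.
   Context: Tropical arithmetic is min-plus; $\mathbb{T}^d=\mathbb{R}^{d+1}/\mathbb{R}(1,\dots,1)$; $\operatorname{tconv}\{v_1,\dots,v_n\}=\{\bigoplus_l\lambda_l\odot v_l:\lambda_l\in\mathbb{R}\}$; $e_B=\sum_{i\in B}e_i$. For $m\in[d+1]$ let $\bar S_m=\{\xi\in\mathbb{T}^d:\xi_m=\min_i\xi_i\}$. For $V=(v_1,\dots,v_n)$ and $x\in\mathbb{T}^d$, $\operatorname{type}_V(x)=(T_1,\dots,T_{d+1})$ with $T_m=\{l\in[n]:v_l\in x+\bar S_m\}$. *)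

(* Defs.v *)
From HB Require Import structures.
From mathcomp Require Import all_boot all_order all_algebra.
From mathcomp Require Import reals.
Set Implicit Arguments. Unset Strict Implicit. Unset Printing Implicit Defensive.
Import Order.TTheory GRing.Theory Num.Theory.
Local Open Scope ring_scope.

Section Graph.
Variables (d : nat) (Vt : finType) (ends : 'I_d.+1 -> Vt * Vt).

Definition simple_graph : Prop :=
  (forall e, (ends e).1 != (ends e).2) /\
  (forall e f, e != f ->
     ends f != ends e /\ ends f != ((ends e).2, (ends e).1)).

Definition adj_in (S : {set 'I_d.+1}) : rel Vt :=
  fun x y => [exists e in S, (ends e == (x, y)) || (ends e == (y, x))].

Definition connected_in (S : {set 'I_d.+1}) (x y : Vt) : bool :=
  connect (adj_in S) x y.

Definition graph_connected : Prop :=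
  forall x y, connected_in [set: 'I_d.+1] x y.

Definition is_bridge (e : 'I_d.+1) : Prop :=
  ~~ connected_in ([set: 'I_d.+1] :\ e) (ends e).1 (ends e).2.

Definition bridgeless : Prop := forall e, ~ is_bridge e.

Definition spanning_tree (S : {set 'I_d.+1}) : Prop :=
  (forall x y, connected_in S x y) /\
  (forall e, e \in S -> ~~ connected_in (S :\ e) (ends e).1 (ends e).2).
End Graph.

(* Points of T^d are represented by vectors 'I_d.+1 -> R. *)
Section Tropical.
Variables (R : realType) (d n : nat).

(* y = (+)_l lambda_l (.) v_l  (min-plus), written out coordinatewise *)
Definition is_tcomb (v : 'I_n -> 'I_d.+1 -> R) (lam : 'I_n -> R)
    (y : 'I_d.+1 -> R) : Prop :=
  forall i, (forall l, y i <= lam l + v l i) /\ (exists l, y i = lam l + v l i).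

(* x in tconv{v_1..v_n} in T^d: x agrees modulo R(1,..,1) with some
   tropical linear combination *)
Definition in_tconv (v : 'I_n -> 'I_d.+1 -> R) (x : 'I_d.+1 -> R) : Prop :=
  exists (c : R) (lam : 'I_n -> R) (y : 'I_d.+1 -> R),
    is_tcomb v lam y /\ forall i, x i = y i + c.

Definition in_sector (m : 'I_d.+1) (xi : 'I_d.+1 -> R) : bool :=
  [forall i, xi m <= xi i].

Definition ttype (v : 'I_n -> 'I_d.+1 -> R) (x : 'I_d.+1 -> R) (m : 'I_d.+1)
    : {set 'I_n} :=
  [set l | in_sector m (fun i => v l i - x i)].

Definition neg_indicator (B : {set 'I_d.+1}) : 'I_d.+1 -> R :=
  fun i => if i \in B then -1 else 0.
End Tropical.

(* Main.v *)
Require Import Defs.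
From HB Require Import structures.
From mathcomp Require Import all_boot all_order all_algebra.
From mathcomp Require Import reals.
Import Order.TTheory GRing.Theory Num.Theory.
Local Open Scope ring_scope.

Section Trees.
Variables (d : nat) (Vt : finType) (ends : 'I_d.+1 -> Vt * Vt).

Lemma adj_sym S : symmetric (adj_in ends S).
Proof.
move=> x y; apply/existsP/existsP => -[g /andP[gS h]]; exists g;
by rewrite gS orbC.
Qed.

Lemma conn_sym S x y : connected_in ends S x y = connected_in ends S y x.
Proof. exact: (sym_connect_sym (adj_sym S)). Qed.

Lemma conn_remove S f : connected_in ends (S :\ f) (ends f).1 (ends f).2 ->
  forall x y, connected_in ends S x y -> connected_in ends (S :\ f) x y.
Proof.
move=> Hf x y; apply: connect_sub => a b /existsP[g /andP[gS /orP[]/eqP Eg]].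
- case: (eqVneq g f) => [Egf|ne].
    by move: Hf; rewrite -Egf Eg.
  by apply: connect1; apply/existsP; exists g; rewrite !inE ne gS Eg eqxx.
- case: (eqVneq g f) => [Egf|ne].
    by move: Hf; rewrite -Egf Eg /= conn_sym.
  by apply: connect1; apply/existsP; exists g; rewrite !inE ne gS Eg eqxx orbT.
Qed.

Lemma path_avoid (S S' : {set 'I_d.+1}) g u (a : Vt) q : S' \subset S ->
  ((ends g).1 == u) || ((ends g).2 == u) ->
  path (adj_in ends S') a q -> u \notin a :: q ->
  path (adj_in ends (S :\ g)) a q.
Proof.
move=> sub Hg; elim: q a => [//|b q IH] a /= /andP[/existsP[g' /andP[g'S h]] pq].
rewrite !inE negb_or => /andP[ua]; rewrite negb_or => /andP[ub uq].
rewrite IH ?andbT; last by rewrite inE negb_or ub.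
  2: done.
apply/existsP; exists g'; rewrite h andbT !inE (subsetP sub _ g'S) andbT.
apply/eqP => E; subst g'.
by case/orP: h => /eqP E; rewrite E /= in Hg; case/orP: Hg => /eqP E';
  rewrite E' ?eqxx in ua ub.
Qed.

Definition Pgood (e : 'I_d.+1) (S : {set 'I_d.+1}) := (e \in S) && [forall x, forall y, connected_in ends S x y].

Lemma step (e : 'I_d.+1) (S : {set 'I_d.+1}) f : simple_graph ends -> Pgood e S -> f \in S ->
  connected_in ends (S :\ f) (ends f).1 (ends f).2 ->
  exists2 f', f' \in S & Pgood e (S :\ f').
Proof.
move=> [noloop _] /andP[eS /forallP cS] fS Hf.
have gen g : g \in S -> g != e -> connected_in ends (S :\ g) (ends g).1 (ends g).2 ->
   exists2 f', f' \in S & Pgood e (S :\ f').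
  move=> gS ge Hg; exists g => //; rewrite /Pgood !inE eq_sym ge eS /=.
  by apply/forallP => x; apply/forallP => y; apply: conn_remove => //; move/forallP: (cS x).
case: (eqVneq f e) => [Efe|fe]; last by apply: (gen f fS fe Hf).
subst f.
case/connectP: Hf => p pp lp.
case: (shortenP pp) lp => p' pp' up' _.
case: p' pp' up' => [|x1 p'] /=.
  by move=> _ _ E; move: (noloop e); rewrite E eqxx.
case/andP => /existsP[g /andP[]]; rewrite !inE => /andP[ge gS] hg pp' up' lp'.
apply: (gen g gS ge).
have Hu : ((ends g).1 == (ends e).1) || ((ends g).2 == (ends e).1).
  by case/orP: hg => /eqP ->; rewrite eqxx ?orbT.
have c1 : connected_in ends (S :\ g) x1 (ends e).1.
  apply: (connect_trans (y := (ends e).2)).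
    apply/connectP; exists p' => //.
    apply: (@path_avoid S (S :\ e) g (ends e).1) => //; first by apply: subD1set.
    by case/andP: up'.
  apply: connect1; apply/existsP; exists e; rewrite !inE eq_sym ge eS /=.
  by rewrite -surjective_pairing eqxx orbT.
by case/orP: hg => /eqP ->; rewrite //= conn_sym.
Qed.

Lemma tree_exists e : simple_graph ends -> graph_connected ends ->
  exists T, spanning_tree ends T /\ e \in T.
Proof.
move=> sg gc.
suff H : forall k (S : {set 'I_d.+1}), (#|S| <= k)%N -> Pgood e S -> exists T, spanning_tree ends T /\ e \in T.
  apply: (H _ setT (leqnn _)); rewrite /Pgood inE /=.
  by apply/forallP => x; apply/forallP => y; apply: gc.
elim=> [|k IH] S.
  rewrite leqn0 cards_eq0 => /eqP -> /andP[]; by rewrite inE.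
move=> cardS PS.
case: (boolP [forall f in S, ~~ connected_in ends (S :\ f) (ends f).1 (ends f).2]).
  move/forall_inP => acyc; exists S; split; last by case/andP: PS.
  split; last by move=> f /acyc.
  by move=> x y; case/andP: PS => _ /forallP /(_ x) /forallP.
case/forall_inPn => f fS /negbNE Hf.
have [f' f'S P'] := @step e S f sg PS fS Hf.
apply: (IH (S :\ f')) => //.
by rewrite -ltnS (leq_trans _ cardS) // (cardsD1 f' S) f'S.
Qed.

End Trees.

Theorem mainTheorem5 (R : realType) (d n : nat) (Vt : finType)
    (ends : 'I_d.+1 -> Vt * Vt) (B : 'I_n -> {set 'I_d.+1}) :
  simple_graph ends ->
  graph_connected ends ->
  bridgeless ends ->
  injective B ->
  (forall S : {set 'I_d.+1}, spanning_tree ends S <-> exists j, B j = S) ->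
  in_tconv (fun j => neg_indicator R (B j)) (fun _ => 0) /\
  (forall i : 'I_d.+1,
     ttype (fun j => neg_indicator R (B j)) (fun _ => 0) i
       = [set j | i \in B j]).
Proof.
move=> sg gc _ _ HB.
have cover i : exists j, i \in B j.
  have [T [TS iT]] := @tree_exists d Vt ends i sg gc.
  by have [j Ej] := (HB T).1 TS; exists j; rewrite Ej.
have nonempty j : exists i, i \in B j.
  have [c _] : spanning_tree ends (B j) by apply/HB; exists j.
  have := c (ends ord0).1 (ends ord0).2.
  case/connectP => -[|x p] /=.
    by move=> _ E; move: (sg.1 ord0); rewrite E eqxx.
  by case/andP => /existsP[g /andP[gB _]] _ _; exists g.
split.
  exists 1, (fun _ => 0), (fun _ => -1); split; last by move=> i; rewrite addNr.
  move=> i; split.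
    by move=> l; rewrite add0r /neg_indicator; case: ifP => // _; rewrite lerN10.
  by have [l il] := cover i; exists l; rewrite add0r /neg_indicator il.
move=> m; apply/setP => l; rewrite !inE /in_sector /neg_indicator.
case: ifP => ml.
  apply/forallP => i; rewrite !subr0; case: ifP => // _; exact: lerN10.
apply/negbTE/forallPn; have [i il] := nonempty l; exists i.
by rewrite il !subr0 -ltNge ltrN10.
Qed.
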